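(* Let $T$ be a countable tree without leaves (vertices of infinite degree allowed), $P=(p(x,y))$ a stochastic nearest-neighbour transition matrix on $T$, and $\lambda\in\mathbb C$. Suppose the oriented edges carry $\lambda$-weights $f(x,y)\in\mathbb C$ satisfying for every vertex $x$ and neighbour $y$: (i) $f(x,y)f(y,x)\neq1$; (ii) $u(x,x)=\sum_{v\sim x}p(x,v)f(v,x)$ converges absolutely and $u(x,x)\neq\lambda$; (iii) $\lambda f(x,y)=p(x,y)+\bigl(u(x,x)-p(x,y)f(y,x)\bigr)f(x,y)$. Extend $f$ to all pairs by $f(x,x)=1$ and multiplicatively along geodesics: $f(x,y)=\prod_{i=1}^k f(x_{i-1},x_i)$ if the geodesic from $x$ to $y$ is $[x_0,\dots,x_k]$. Define $g(x,y)=f(x,y)/(\lambda-u(y,y))$ for $x,y\in T$. Then for every $x\in T$ and every neighbour $y$ of $x$: $$g(x,x)p(x,y)=\frac{f(x,y)}{1-f(x,y)f(y,x)},\qquad g(x,x)g(y,y)=g(x,y)\Bigl(\frac1{p(x,y)}+g(y,x)\Bigr),$$ $$\lambda\,g(x,x)=1+\sum_{y:\,y\sim x}\frac{f(x,y)f(y,x)}{1-f(x,y)f(y,x)},$$ and when $x$ has infinite degree the last sum converges absolutely.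
   Context: A nearest-neighbour stochastic transition matrix means $p(x,y)>0$ iff $x\sim y$ and $\sum_y p(x,y)=1$ for all $x$. A leaf is a vertex of degree $1$. *)

(* Defs.v *)
From Stdlib Require Import Reals.
From Coquelicot Require Import Coquelicot.
From mathcomp Require Import ssreflect ssrfun ssrbool eqtype ssrnat seq path choice.

Set Implicit Arguments.
Unset Strict Implicit.

Section Defs.
Variable V : countType.
Variable adj : rel V.

Definition simple_graph : Prop :=
  (forall x y, adj x y = adj y x) /\ (forall x, ~~ adj x x).

Definition connected_graph : Prop :=
  forall x y, exists s : seq V, path adj x s /\ last x s = y.

(* a cycle: distinct vertices v0 :: s (at least 3), consecutive adjacent,
   last adjacent to v0 *)
Definition is_cycle (v0 : V) (s : seq V) : Prop :=
  [/\ (2 <= size s)%N, path adj v0 s, uniq (v0 :: s) & adj (last v0 s) v0].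

Definition acyclic : Prop := forall v0 s, ~ is_cycle v0 s.

Definition is_tree : Prop := [/\ simple_graph, connected_graph & acyclic].

Definition is_leaf (x : V) : Prop :=
  exists y, adj x y /\ forall z, adj x z -> z = y.

Definition infinite_degree (x : V) : Prop :=
  forall s : seq V, exists y, adj x y /\ y \notin s.

Definition geodesic (x : V) (s : seq V) : Prop :=
  path adj x s /\
  forall s', path adj x s' -> last x s' = last x s -> (size s <= size s')%N.

Fixpoint walk_prod (f : V -> V -> C) (x : V) (s : seq V) : C :=
  match s with
  | [::] => RtoC 1
  | y :: s' => Cmult (f x y) (walk_prod f y s')
  end.

(* enumeration of all vertices via the countType structure: the n-th term
   is a v at the vertex v with pickle v = n (each vertex occurs exactly once) *)
Definition vterm {A} (zero : A) (a : V -> A) (n : nat) : A :=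
  match @pickle_inv V n with Some v => a v | None => zero end.

Definition nbterm (x : V) (a : V -> C) (n : nat) : C :=
  vterm (RtoC 0) (fun v => if adj x v then a v else RtoC 0) n.

Definition nb_abs_conv (x : V) (a : V -> C) : Prop :=
  ex_series (fun n => Cmod (nbterm x a n)).

Definition nb_sum_is (x : V) (a : V -> C) (l : C) : Prop :=
  is_series (nbterm x a) l.

Definition nn_stochastic (p : V -> V -> R) : Prop :=
  (forall x y, (0 <= p x y)%R) /\
  (forall x y, (0 < p x y)%R <-> adj x y) /\
  (forall x, is_series (vterm 0%R (p x)) 1%R).

End Defs.

(* Main.v *)
Require Import Defs.
From Stdlib Require Import Reals.
From Coquelicot Require Import Coquelicot.
From Stdlib Require Import Lra.
From mathcomp Require Import ssreflect ssrfun ssrbool eqtype ssrnat seq path choice.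


Lemma scal_ser (a : nat -> C) (l c : C) : is_series a l -> is_series (fun n => Cmult c (a n)) (Cmult c l).
Proof. move=> H. exact: (@is_series_scal C_AbsRing C_NormedModule c a l H). Qed.
Lemma scal_exR (a : nat -> R) (c : R) : ex_series a -> ex_series (fun n => Rmult c (a n)).
Proof. move=> H. exact: (@ex_series_scal R_AbsRing R_NormedModule c a H). Qed.

Theorem lemma3p2 (V : countType) (adj : rel V) (p : V -> V -> R)
  (lam : C) (f : V -> V -> C) (u : V -> C) :
  is_tree adj ->
  (forall x, ~ is_leaf adj x) ->
  nn_stochastic adj p ->
  (* (i) *)
  (forall x y, adj x y -> Cmult (f x y) (f y x) <> RtoC 1) ->
  (* (ii) u(x,x) = sum_{v ~ x} p(x,v) f(v,x), absolutely convergent, <> lam *)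
  (forall x, nb_abs_conv adj x (fun v => Cmult (RtoC (p x v)) (f v x))) ->
  (forall x, nb_sum_is adj x (fun v => Cmult (RtoC (p x v)) (f v x)) (u x)) ->
  (forall x, u x <> lam) ->
  (* (iii) *)
  (forall x y, adj x y ->
     Cmult lam (f x y) =
     Cplus (RtoC (p x y))
           (Cmult (Cminus (u x) (Cmult (RtoC (p x y)) (f y x))) (f x y))) ->
  (* extension of f: f(x,x) = 1 and multiplicative along geodesics *)
  (forall x, f x x = RtoC 1) ->
  (forall x s, geodesic adj x s -> f x (last x s) = walk_prod f x s) ->
  let g := fun x y => Cdiv (f x y) (Cminus lam (u y)) in
  forall x,
    (forall y, adj x y ->
       Cmult (g x x) (RtoC (p x y)) =
         Cdiv (f x y) (Cminus (RtoC 1) (Cmult (f x y) (f y x))) /\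
       Cmult (g x x) (g y y) =
         Cmult (g x y) (Cplus (Cinv (RtoC (p x y))) (g y x))) /\
    nb_sum_is adj x
      (fun y => Cdiv (Cmult (f x y) (f y x))
                     (Cminus (RtoC 1) (Cmult (f x y) (f y x))))
      (Cminus (Cmult lam (g x x)) (RtoC 1)) /\
    (infinite_degree adj x ->
     nb_abs_conv adj x
      (fun y => Cdiv (Cmult (f x y) (f y x))
                     (Cminus (RtoC 1) (Cmult (f x y) (f y x))))).
Proof.
move=> _ _ [p0 [ppos _]] Hi Habs Hsum Hu Hiii Hxx _ g x.
have Ha : Cminus lam (u x) <> RtoC 0.
  move=> E; apply: (Hu x).
  have L : lam = Cplus (Cminus lam (u x)) (u x) by unfold Cminus; ring.
  rewrite L E; ring.
have key : forall y, adj x y ->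
  Cmult (Cminus lam (u x)) (f x y) =
  Cmult (RtoC (p x y)) (Cminus (RtoC 1) (Cmult (f x y) (f y x))).
  move=> y Hy. have := Hiii x y Hy. move=> E.
  transitivity (Cminus (Cmult lam (f x y)) (Cmult (u x) (f x y))).
    unfold Cminus; ring.
  rewrite E; unfold Cminus; ring.
have H1 : forall y, adj x y -> Cminus (RtoC 1) (Cmult (f x y) (f y x)) <> RtoC 0.
  move=> y Hy E; apply: (Hi x y Hy). rewrite -[Cmult _ _]Cplus_0_r -E.
  unfold Cminus; ring.
have HP : forall y, adj x y -> RtoC (p x y) =
  Cdiv (Cmult (Cminus lam (u x)) (f x y)) (Cminus (RtoC 1) (Cmult (f x y) (f y x))).
  move=> y Hy. rewrite key //. field. exact: H1.
have term : forall y, adj x y ->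
  Cdiv (Cmult (f x y) (f y x)) (Cminus (RtoC 1) (Cmult (f x y) (f y x))) =
  Cmult (Cinv (Cminus lam (u x))) (Cmult (RtoC (p x y)) (f y x)).
  move=> y Hy. rewrite (HP y Hy). field. split; [exact: H1|exact: Ha].
have tn : forall n,
  nbterm adj x (fun y => Cdiv (Cmult (f x y) (f y x))
                     (Cminus (RtoC 1) (Cmult (f x y) (f y x)))) n =
  Cmult (Cinv (Cminus lam (u x))) (nbterm adj x (fun v => Cmult (RtoC (p x v)) (f v x)) n).
  move=> n. rewrite /nbterm /vterm. case: (pickle_inv n) => [v|]; last by rewrite Cmult_0_r.
  case E: (adj x v); last by rewrite Cmult_0_r.
  exact: term.
split; [|split].
- move=> y Hy.
  have Pn : RtoC (p x y) <> RtoC 0.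
    move=> E. have := proj2 (ppos x y) Hy. case: E => ->. lra.
  have Fn : f x y <> RtoC 0.
    move=> E. move: (key y Hy). rewrite {1}E Cmult_0_r => E2.
    apply: (H1 y Hy).
    have L : Cminus (RtoC 1) (Cmult (f x y) (f y x)) = Cdiv (Cmult (RtoC (p x y)) (Cminus (RtoC 1) (Cmult (f x y) (f y x)))) (RtoC (p x y)) by field.
    rewrite L -E2; field; exact: Pn.
  have Hb : Cminus lam (u y) <> RtoC 0.
    move=> E; apply: (Hu y).
    have L : lam = Cplus (Cminus lam (u y)) (u y) by unfold Cminus; ring.
    rewrite L E; ring.
  rewrite /g Hxx Hxx. split.
  + rewrite (HP y Hy). field. split; [exact: H1|exact: Ha].
  + rewrite (HP y Hy). field. repeat split; try assumption. exact: H1.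
- rewrite /nb_sum_is.
  apply: (is_series_ext _ _ _ (fun n => esym (tn n))).
  have -> : Cminus (Cmult lam (g x x)) (RtoC 1) = Cmult (Cinv (Cminus lam (u x))) (u x).
    rewrite /g Hxx. field. exact: Ha.
  apply: scal_ser. exact: Hsum.
- move=> _. rewrite /nb_abs_conv.
  apply: (ex_series_ext (fun n => Rmult (Cmod (Cinv (Cminus lam (u x))))
              (Cmod (nbterm adj x (fun v => Cmult (RtoC (p x v)) (f v x)) n)))).
    move=> n. by rewrite tn Cmod_mult.
  apply: scal_exR. exact: Habs.
Qed.
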